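(* Let $f:\mathbb{R}^d\to\mathbb{R}$ and $P:\mathbb{R}^d\to\mathbb{R}^s$ be continuously differentiable, $D\subseteq\mathbb{R}^s$ closed, $\Omega=\{z\mid P(z)\in D\}$, and let $\bar z\in\Omega$ be B-stationary for the problem $\min f(z)$ s.t. $P(z)\in D$. Assume that GGCQ holds at $\bar z$ and that the mapping $u\rightrightarrows\nabla P(\bar z)u-T_D(P(\bar z))$ is metrically subregular at $(0,0)$. Consider the program \[\min_{(u,y)\in\mathbb{R}^d\times\mathbb{R}^s}\ \langle\nabla f(\bar z),u\rangle+\tfrac12\|y\|^2\quad\text{subject to}\quad\nabla P(\bar z)u+y\in T_D(P(\bar z)).\tag{A}\] Then: the mapping $(u,y)\rightrightarrows\nabla P(\bar z)u+y-T_D(P(\bar z))$ is metrically subregular at $((\bar u,\bar y),0)$ for every point $(\bar u,\bar y)$ feasible for (A); the program (A) is bounded below; and for every B-stationary solution $(\bar u,\bar y)$ of (A) there is a multiplier $w^\ast\in\widehat N_{T_D(P(\bar z))}(\nabla P(\bar z)\bar u+\bar y)$ such that \[\nabla f(\bar z)+\nabla P(\bar z)^\ast w^\ast=0,\qquad\bar y+w^\ast=0.\]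
   Context: Tangent cone $T_\Omega(\bar z)=\{w\mid \exists t_k\downarrow0,\ w_k\to w,\ \bar z+t_kw_k\in\Omega\}$; polar cone $K^\ast=\{z^\ast\mid\langle z^\ast,w\rangle\le0\ \forall w\in K\}$; regular normal cone $\widehat N_\Omega(\bar z)=(T_\Omega(\bar z))^\ast$. Linearized tangent cone $T^{\rm lin}_{P,D}(\bar z)=\{u\mid\nabla P(\bar z)u\in T_D(P(\bar z))\}$. For a problem of minimizing a $C^1$ function $h$ over a closed set $S$, a feasible point $\bar x$ is B-stationary if $0\in\nabla h(\bar x)+\widehat N_S(\bar x)$. GGCQ holds at $\bar z$ if $\widehat N_\Omega(\bar z)=(T^{\rm lin}_{P,D}(\bar z))^\ast$. A mapping $M$ is metrically subregular at $(\bar z,\bar w)\in\operatorname{gph}M$ if there are a neighborhood $W$ of $\bar z$ and $\kappa>0$ with $\operatorname{dist}(z,M^{-1}(\bar w))\le\kappa\operatorname{dist}(\bar w,M(z))$ for $z\in W$. *)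

(* Defs.v *)
From HB Require Import structures.
From mathcomp Require Import all_boot all_order all_algebra.
From mathcomp Require Import all_classical all_reals all_analysis.
Set Implicit Arguments. Unset Strict Implicit. Unset Printing Implicit Defensive.
Import Order.TTheory GRing.Theory Num.Theory.
Import numFieldNormedType.Exports.
Local Open Scope classical_set_scope.
Local Open Scope ring_scope.

Section Defs.
Variable R : realType.

Definition dotv n (u v : 'rV[R]_n) : R := \sum_(i < n) u 0 i * v 0 i.
Definition enorm n (u : 'rV[R]_n) : R := Num.sqrt (dotv u u).

(* Euclidean distance from a point to a set (+oo for the empty set) *)
Definition edist n (x : 'rV[R]_n) (S : set 'rV[R]_n) : \bar R :=
  ereal_inf [set (enorm (x - y))%:E | y in S].

(* gradient of a scalar function and Jacobian (as a d x s matrix acting on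
   row vectors: P'(z) u = u *m jac P z) via the Frechet derivative 'd *)
Definition grad d (f : 'rV[R]_d -> R) (z : 'rV[R]_d) : 'rV[R]_d :=
  \row_j ('d f z (delta_mx 0 j)).
Definition jac d s (P : 'rV[R]_d -> 'rV[R]_s) (z : 'rV[R]_d) : 'M[R]_(d, s) :=
  \matrix_(j, i) ('d P z (delta_mx 0 j)) 0 i.

Definition C1_scalar d (f : 'rV[R]_d -> R) : Prop :=
  (forall z, differentiable f z) /\ continuous (grad f).
Definition C1_map d s (P : 'rV[R]_d -> 'rV[R]_s) : Prop :=
  (forall z, differentiable P z) /\ continuous (jac P).

Definition tangent_cone n (A : set 'rV[R]_n) (z : 'rV[R]_n) : set 'rV[R]_n :=
  [set w | exists (t : nat -> R) (wk : nat -> 'rV[R]_n),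
     (forall k, 0 < t k) /\ (forall k, t k.+1 <= t k) /\ t @ \oo --> 0 /\
     wk @ \oo --> w /\ (forall k, A (z + t k *: wk k))].

Definition polar n (K : set 'rV[R]_n) : set 'rV[R]_n :=
  [set zs | forall w, K w -> dotv zs w <= 0].

Definition reg_normal n (A : set 'rV[R]_n) (z : 'rV[R]_n) : set 'rV[R]_n :=
  polar (tangent_cone A z).

Definition lin_tangent_cone d s (P : 'rV[R]_d -> 'rV[R]_s) (D : set 'rV[R]_s)
  (z : 'rV[R]_d) : set 'rV[R]_d :=
  [set u | tangent_cone D (P z) (u *m jac P z)].

Definition B_stationary n (h : 'rV[R]_n -> R) (S : set 'rV[R]_n) (x : 'rV[R]_n) : Prop :=
  S x /\ reg_normal S x (- grad h x).

Definition GGCQ d s (P : 'rV[R]_d -> 'rV[R]_s) (D : set 'rV[R]_s) (z : 'rV[R]_d) : Prop :=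
  reg_normal [set x | D (P x)] z = polar (lin_tangent_cone P D z).

Definition metric_subregular m n (M : 'rV[R]_m -> set 'rV[R]_n)
  (zb : 'rV[R]_m) (wb : 'rV[R]_n) : Prop :=
  M zb wb /\
  exists (W : set 'rV[R]_m) (kappa : R), nbhs zb W /\ 0 < kappa /\
    forall z, W z ->
      (edist z [set z' | M z' wb] <= kappa%:E * edist wb (M z))%E.

End Defs.

(* Main.v *)
Require Import Defs.
From HB Require Import structures.
From mathcomp Require Import all_boot all_order all_algebra.
From mathcomp Require Import all_classical all_reals all_analysis.
From mathcomp Require Import ring lra.
Set Implicit Arguments. Unset Strict Implicit. Unset Printing Implicit Defensive.
Import Order.TTheory GRing.Theory Num.Theory.
Import numFieldNormedType.Exports.
Local Open Scope classical_set_scope.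
Local Open Scope ring_scope.

Section Helpers.
Variable R : realType.

Lemma dotvC n (u v : 'rV[R]_n) : dotv u v = dotv v u.
Proof. by apply: eq_bigr => i _; rewrite mulrC. Qed.

Lemma dotvDr n (u v w : 'rV[R]_n) : dotv u (v + w) = dotv u v + dotv u w.
Proof. by rewrite /dotv -big_split; apply: eq_bigr => i _; rewrite mxE mulrDr. Qed.

Lemma dotvDl n (u v w : 'rV[R]_n) : dotv (v + w) u = dotv v u + dotv w u.
Proof. by rewrite dotvC dotvDr !(dotvC u). Qed.

Lemma dotvZr n a (u v : 'rV[R]_n) : dotv u (a *: v) = a * dotv u v.
Proof. by rewrite /dotv mulr_sumr; apply: eq_bigr => i _; rewrite mxE mulrCA. Qed.

Lemma dotvZl n a (u v : 'rV[R]_n) : dotv (a *: v) u = a * dotv v u.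
Proof. by rewrite dotvC dotvZr dotvC. Qed.

Lemma dotvNr n (u v : 'rV[R]_n) : dotv u (- v) = - dotv u v.
Proof. by rewrite -scaleN1r dotvZr mulN1r. Qed.

Lemma dotvNl n (u v : 'rV[R]_n) : dotv (- v) u = - dotv v u.
Proof. by rewrite dotvC dotvNr dotvC. Qed.

Lemma dotv0r n (u : 'rV[R]_n) : dotv u 0 = 0.
Proof. by rewrite -(scale0r 0) dotvZr mul0r. Qed.

Lemma dotv_ge0 n (u : 'rV[R]_n) : 0 <= dotv u u.
Proof. by apply: sumr_ge0 => i _; rewrite -expr2 sqr_ge0. Qed.

Lemma dotv_delta n (u : 'rV[R]_n) j : dotv u (delta_mx 0 j) = u 0 j.
Proof.
rewrite /dotv (bigD1 j) //= big1 ?addr0; first by rewrite mxE !eqxx mulr1.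
by move=> i /negbTE ij; rewrite mxE eqxx /=; case: eqP => [h|]; [rewrite h eqxx in ij|rewrite mulr0].
Qed.

Lemma dotv_split n1 n2 (x z : 'rV[R]_(n1 + n2)) :
  dotv x z = dotv (lsubmx x) (lsubmx z) + dotv (rsubmx x) (rsubmx z).
Proof. by rewrite /dotv big_split_ord /=; congr (_ + _); apply: eq_bigr => i _; rewrite !mxE. Qed.

Lemma dotv_mulmx n m (y : 'rV[R]_n) (v : 'rV[R]_m) (A : 'M[R]_(m, n)) :
  dotv y (v *m A) = dotv (y *m A^T) v.
Proof.
rewrite /dotv; under eq_bigr => i _ do rewrite mxE mulr_sumr.
rewrite exchange_big /=; apply: eq_bigr => j _.
rewrite mxE mulr_suml; apply: eq_bigr => i _; rewrite mxE; ring.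
Qed.

Lemma enorm_ge0 n (u : 'rV[R]_n) : 0 <= enorm u.
Proof. exact: sqrtr_ge0. Qed.

Lemma enorm_sq n (u : 'rV[R]_n) : enorm u ^+ 2 = dotv u u.
Proof. by rewrite sqr_sqrtr // dotv_ge0. Qed.

Lemma enormN n (u : 'rV[R]_n) : enorm (- u) = enorm u.
Proof. by rewrite /enorm dotvNl dotvNr opprK. Qed.

Lemma enormZ n a (u : 'rV[R]_n) : enorm (a *: u) = `|a| * enorm u.
Proof. by rewrite /enorm dotvZl dotvZr mulrA sqrtrM ?sqr_ge0 // sqrtr_sqr. Qed.

Lemma enorm_split n1 n2 (x : 'rV[R]_(n1 + n2)) : lsubmx x = 0 ->
  enorm x = enorm (rsubmx x).
Proof. by move=> h; rewrite /enorm dotv_split h dotv0r add0r. Qed.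

Lemma coord_le_enorm n (u : 'rV[R]_n) i : `|u 0 i| <= enorm u.
Proof.
rewrite -sqrtr_sqr; apply: ler_wsqrtr; rewrite /dotv (bigD1 i) //= -expr2.
by rewrite lerDl; apply: sumr_ge0 => j _; rewrite -expr2 sqr_ge0.
Qed.

Lemma dotv_lb n (g w : 'rV[R]_n) :
  - ((\sum_(i < n) `|g 0 i|) * enorm w) <= dotv g w.
Proof.
rewrite mulr_suml /dotv -sumrN; apply: ler_sum => i _.
rewrite lerNl; apply: (le_trans (ler_norm _)); rewrite normrN normrM.
by apply: ler_wpM2l => //; apply: coord_le_enorm.
Qed.


Lemma cone_scale n (D : set 'rV[R]_n) p w l : tangent_cone D p w -> 0 < l ->
  tangent_cone D p (l *: w).
Proof.
move=> [t [wk [t0 [tdec [tc [wc hD]]]]]] l0.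
exists (fun k => t k / l), (fun k => l *: wk k); split.
  by move=> k; rewrite divr_gt0.
split; first by move=> k; rewrite ler_pM2r ?invr_gt0.
split; first by rewrite -(mul0r l^-1); apply: cvgMr_tmp.
split; first exact: cvgZl_tmp.
by move=> k; rewrite scalerA mulrVK ?unitfE ?gt_eqF.
Qed.

Lemma continuous_row0 m n1 n2 :
  continuous (fun v : 'M[R]_(m, n2) => row_mx (0 : 'M[R]_(m, n1)) v).
Proof.
move=> u A /nbhs_ballP[e /= e0 eA].
apply/nbhs_ballP; exists e => //= v [_ uv]; apply: eA; split => // i j.
rewrite -[j]splitK; case: (fintype.split j) => k /=.
  by rewrite !row_mxEl; apply: ballxx.
by rewrite !row_mxEr; apply: uv.
Qed.

Lemma grad_dot n (h : 'rV[R]_n -> R) x w : 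
  dotv (grad h x) w = 'd h x w.
Proof.
rewrite {2}(row_sum_delta w) linear_sum /dotv; apply: eq_bigr => j _.
by rewrite mxE linearZ /= mulrC.
Qed.

Lemma dotv_differentiable m n (p q : 'rV[R]_m -> 'rV[R]_n) x :
  differentiable p x -> differentiable q x ->
  differentiable (fun z => dotv (p z) (q z)) x.
Proof.
move=> dp dq.
have -> : (fun z => dotv (p z) (q z)) =
   \sum_(i < n) (fun z => p z 0 i * q z 0 i).
  by rewrite fct_sumE; apply/funext => z.
apply: (@differentiable_sum R _ R^o n (fun i z => p z 0 i * q z 0 i)) => i.
have h1 : differentiable (fun z => p z 0 i) x.
  exact: (@differentiable_comp _ _ _ R^o p (fun N : 'rV[R]_n => N 0 i) x dp (differentiable_coord _ _ _)).
have h2 : differentiable (fun z => q z 0 i) x.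
  exact: (@differentiable_comp _ _ _ R^o q (fun N : 'rV[R]_n => N 0 i) x dq (differentiable_coord _ _ _)).
exact: (differentiableM h1 h2).
Qed.


Lemma objA_diff d s (g : 'rV[R]_d) (x w : 'rV[R]_(d + s)) :
  'd (fun x : 'rV[R]_(d + s) =>
                dotv g (lsubmx x) + 2^-1 * dotv (rsubmx x) (rsubmx x)) x w
   = dotv g (lsubmx w) + dotv (rsubmx x) (rsubmx w).
Proof.
set objA := (fun x : 'rV[R]_(d + s) =>
                dotv g (lsubmx x) + 2^-1 * dotv (rsubmx x) (rsubmx x)).
have dA : differentiable objA x.
  apply: (@differentiableD _ _ R^o (fun x : 'rV[R]_(d + s) => dotv g (lsubmx x))
      (fun x => 2^-1 * dotv (rsubmx x) (rsubmx x))).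
    exact: (@dotv_differentiable _ _ (cst g) lsubmx x (differentiable_cst _ _)
             (differentiable_lsubmx _)).
  apply: (@differentiableM _ _ (cst 2^-1) (fun x => dotv (rsubmx x) (rsubmx x))).
    exact: differentiable_cst.
  exact: (@dotv_differentiable _ _ rsubmx rsubmx x (differentiable_rsubmx _)
             (differentiable_rsubmx _)).
rewrite -deriveE //.
set a := dotv g (lsubmx w) + dotv (rsubmx x) (rsubmx w).
set b := 2^-1 * dotv (rsubmx w) (rsubmx w).
apply: cvg_lim => //.
have HG : (fun h : R => a + h * b) @ nbhs (0:R) --> a.
  rewrite -[X in _ --> X]addr0; apply: cvgD; first exact: cvg_cst.
  have := @cvgMr_tmp R R (nbhs (0:R)) _ (fun h => h) 0 b cvg_id.
  rewrite mul0r; apply.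
have HG' : (fun h : R => a + h * b) @ (0:R)^' --> a.
  by apply: cvg_trans HG; apply: cvg_app; exact: nbhs_dnbhs.
apply: cvg_trans HG'; apply: near_eq_cvg; near=> h.
have hn : h != 0 by near: h; exact: nbhs_dnbhs_neq.
rewrite /= /objA /a /b !linearD !linearZ /=.
rewrite !dotvDr !dotvDl !dotvZl !dotvZr [dotv (rsubmx w) (rsubmx x)]dotvC.
rewrite /GRing.scale /=. field; exact: hn.
Unshelve. all: by end_near.
Qed.

End Helpers.

Theorem lemma4p6 (R : realType) (d s : nat)
  (f : 'rV[R]_d -> R) (P : 'rV[R]_d -> 'rV[R]_s) (D : set 'rV[R]_s)
  (zb : 'rV[R]_d) :
  C1_scalar f -> C1_map P -> closed D ->
  B_stationary f [set z | D (P z)] zb ->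
  GGCQ P D zb ->
  metric_subregular
    (fun u : 'rV[R]_d => [set v | exists t, tangent_cone D (P zb) t /\
                                   v = u *m jac P zb - t]) 0 0 ->
  let TD := tangent_cone D (P zb) in
  let A := jac P zb in
  let g := grad f zb in
  let feasA := [set x : 'rV[R]_(d + s) | TD (lsubmx x *m A + rsubmx x)] in
  let objA := fun x : 'rV[R]_(d + s) =>
                dotv g (lsubmx x) + 2^-1 * dotv (rsubmx x) (rsubmx x) in
  (forall xb, feasA xb ->
     metric_subregular
       (fun x : 'rV[R]_(d + s) => [set v | exists t, TD t /\
                                   v = lsubmx x *m A + rsubmx x - t]) xb 0)
  /\ (exists m : R, forall x, feasA x -> m <= objA x)
  /\ (forall xb, B_stationary objA feasA xb ->
        exists ws : 'rV[R]_s,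
          reg_normal TD (lsubmx xb *m A + rsubmx xb) ws /\
          g + ws *m A^T = 0 /\ rsubmx xb + ws = 0).
Proof.
move=> [dfz _] _ _ [Dz Bst] GG [M00 [W [kappa [HW [k0 Hsub]]]]] TD A g feasA objA.
split; [|split].
- move=> xb Fxb; split.
    by exists (lsubmx xb *m A + rsubmx xb); split => //; rewrite subrr.
  exists setT, 1; split; first exact: filterT.
  split => //; move=> z _; rewrite mul1e.
  apply: le_ereal_inf_tmp => _ [v [t [TDt ->]] <-].
  apply: ereal_inf_lbound; exists (row_mx (lsubmx z) (t - lsubmx z *m A)).
    exists t; split => //; rewrite row_mxKl row_mxKr.
    by rewrite [_ + (_ - _)]addrC subrK subrr.
  congr (_%:E); rewrite enorm_split; last by rewrite linearB /= row_mxKl subrr.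
  rewrite linearB /= row_mxKr sub0r enormN; congr enorm.
  by rewrite opprB addrA [rsubmx z + _]addrC.
- set C := \sum_(i < d) `|g 0 i|.
  have C0 : 0 <= C by apply: sumr_ge0.
  exists (- C - 2^-1 * (C * kappa) ^+ 2) => x Fx.
  set u := lsubmx x; set y := rsubmx x.
  have : nbhs (0:R) (fun l => W (l *: u)).
    have hc := @scalel_continuous R _ u 0.
    apply: hc; rewrite /= scale0r; exact: HW.
  case/nbhs_ballP => e /= e0 He.
  set l := e / 2.
  have l0 : 0 < l by rewrite divr_gt0.
  have Wl : W (l *: u).
    apply: He; rewrite /ball /= sub0r normrN gtr0_norm //; rewrite /l; lra.
  pose Mz := fun z : 'rV[R]_d => [set v | exists t, tangent_cone D (P zb) t /\
                 v = z *m jac P zb - t].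
  pose Lz := [set z' : 'rV[R]_d | exists t, tangent_cone D (P zb) t /\
                 0 = z' *m jac P zb - t].
  have H1 : (Defs.edist (0%R : 'rV[R]_s) (Mz (l *: u)) <= (enorm (l *: y))%:E)%E.
    apply: ereal_inf_lbound; exists ((l *: u) *m A - l *: (u *m A + y)).
      by exists (l *: (u *m A + y)); split => //; exact: cone_scale Fx l0.
    congr (_%:E); rewrite sub0r opprB scalerDr -scalemxAl addrAC subrr add0r.
    by [].
  have H2 := le_trans (Hsub _ Wl) (@lee_wpmul2l R kappa%:E (ltW (k0 : (0 < kappa%:E)%E)) _ _ H1).
  rewrite enormZ gtr0_norm // in H2.
  have H3 : (Defs.edist (l *: u) Lz < (kappa * (l * enorm y) + l)%:E)%E.
    by apply: (le_lt_trans H2); rewrite -EFinM lte_fin ltrDl.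
  have [_ [u' [t [TDt /eqP Et]] <-] hlt] := ereal_inf_lt H3.
  rewrite eq_sym subr_eq0 in Et; move/eqP: Et => Et; rewrite -Et in TDt.
  rewrite lte_fin in hlt.
  have Pu' : dotv (- grad f zb) u' <= 0.
    by move: Bst; rewrite GG; apply.
  rewrite dotvNl oppr_le0 -/g in Pu'.
  have Hlb := dotv_lb g (l *: u - u'); rewrite -/C in Hlb.
  have Hsplit : l * dotv g u = dotv g u' + dotv g (l *: u - u').
    by rewrite -dotvDr addrC subrK dotvZr.
  have Ny := enorm_ge0 y.
  have Hyy : dotv y y = enorm y ^+ 2 by rewrite enorm_sq.
  rewrite /objA -/u -/y Hyy.
  set G := dotv g u in Hsplit *; set N := enorm y in Ny Hyy hlt H2 *.
  set E := enorm (l *: u - u') in Hlb hlt.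
  have S1 : - (C * (kappa * (l * N) + l)) <= l * G.
    rewrite Hsplit; have : C * E <= C * (kappa * (l * N) + l).
      by apply: ler_wpM2l => //; exact: ltW.
    lra.
  have S2 : - (C * (kappa * N + 1)) <= G.
    have : 0 <= l * (G + C * (kappa * N + 1)) by nra.
    by rewrite pmulr_rge0 //; lra.
  have : 0 <= (N - C * kappa) ^+ 2 by exact: sqr_ge0.
  nra.
- move=> xb [Fxb Bx]; exists (- rsubmx xb).
  have key : forall w, dotv (grad objA xb) w =
      dotv g (lsubmx w) + dotv (rsubmx xb) (rsubmx w).
    by move=> w; rewrite grad_dot; exact: objA_diff.
  have Hdir : forall w, tangent_cone feasA xb w ->
      0 <= dotv g (lsubmx w) + dotv (rsubmx xb) (rsubmx w).
    by move=> w Tw; have := Bx w Tw; rewrite dotvNl key oppr_le0.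
  split.
    move=> t0 [tk [wk [h0 [hdec [hc [hwc hD]]]]]].
    rewrite dotvNl oppr_le0.
    have := Hdir (row_mx (0 : 'rV[R]_d) t0).
    rewrite row_mxKl row_mxKr dotv0r add0r; apply.
    exists tk, (fun k => row_mx (0 : 'rV[R]_d) (wk k)); do 3 (split => //).
    split.
      by apply: (cvg_comp wk (fun v => row_mx (0 : 'rV[R]_d) v) hwc); exact: continuous_row0.
    move=> k; rewrite /feasA /= !linearD !linearZ /= row_mxKl row_mxKr scaler0 addr0.
    by rewrite addrA; exact: hD.
  split; last by rewrite subrr.
  have Hv : forall v, 0 <= dotv g v - dotv (rsubmx xb) (v *m A).
    move=> v; have := Hdir (row_mx v (- (v *m A))).
    rewrite row_mxKl row_mxKr dotvNr; apply.
    exists harmonic, (fun _ => row_mx v (- (v *m A))); split.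
      by move=> k; exact: harmonic_gt0.
    split.
      by move=> k; rewrite /= lef_pV2 ?ler_nat ?posrE // ltr0n.
    split; first exact: cvg_harmonic.
    split; first exact: cvg_cst.
    move=> k; rewrite /feasA /= !linearD !linearZ /= row_mxKl row_mxKr.
    rewrite mulmxDl -scalemxAl scalerN addrACA subrr addr0; exact: Fxb.
  have Eg : g = rsubmx xb *m A^T.
    apply/rowP => j; have h1 := Hv (delta_mx 0 j); have h2 := Hv (- delta_mx 0 j).
    rewrite dotvNr mulNmx dotvNr in h2.
    rewrite !dotv_mulmx !dotv_delta in h1 h2.
    lra.
  by rewrite Eg mulNmx subrr.
Qed.
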